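(* Every finite group with the Magnus Property is solvable.
   Context: For a group $G$ and $x\in G$, $x^G$ denotes the conjugacy class of $x$ and $\langle x^G\rangle$ the normal closure of $x$ in $G$. A group $G$ has the Magnus Property (MP) if whenever $x,y\in G$ satisfy $\langle x^G\rangle=\langle y^G\rangle$, then $x$ is conjugate in $G$ to $y$ or to $y^{-1}$. *)

(* Defs.v *)
From mathcomp Require Import all_boot all_fingroup all_solvable.
Set Implicit Arguments. Unset Strict Implicit. Unset Printing Implicit Defensive.
Local Open Scope group_scope.

(* Magnus Property for a finite group G (given as a subgroup of a finGroupType):
   for all x, y in G, if the normal closures of x and y in G coincide, then x
   is conjugate in G to y or to y^-1.  The normal closure of x in G is the
   subgroup generated by the G-conjugacy class x ^: G. *)
Definition magnus_property (gT : finGroupType) (G : {set gT}) : Prop :=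
  forall x y : gT, x \in G -> y \in G ->
    <<x ^: G>> = <<y ^: G>> -> (x \in y ^: G) \/ (x \in y^-1 ^: G).

(* Main.v *)
Require Import Defs.
From mathcomp Require Import all_boot all_fingroup all_solvable.

Local Open Scope group_scope.

Theorem proposition1p1 (gT : finGroupType) (G : {group gT}) :
  magnus_property G -> solvable G.
Proof.
move=> MP; apply/negPn/negP => nsolG.
have [L minL] : {L : {group gT} | mingroup L
    (fun H : {group gT} => (H <| G) && ~~ solvable H)}.
  by apply: ex_mingroup; exists G; rewrite normal_refl nsolG.
case/mingroupP: minL => /andP[nLG nsolL] minL.
have sLG : L \subset G := normal_sub nLG.
have solP : forall H : {group gT}, H <| G -> H \proper L -> solvable H.
  move=> H nHG pHL; apply/negPn/negP => nsH.
  have eHL := minL H; rewrite nHG nsH (proper_sub pHL) in eHL.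
  by move: pHL; rewrite (eHL isT isT) properE subxx andbF.
have L1 : L :!=: 1.
  by apply/eqP => L1; move: nsolL; rewrite L1 solvable1.
have [R maxR] : {R : {group gT} | maxgroup R
    (fun H : {group gT} => (H <| G) && (H \proper L))}.
  by apply: ex_maxgroup; exists 1%G; rewrite normal1 proper1G.
case/maxgroupP: maxR => /andP[nRG pRL] maxR.
have solR := solP R nRG pRL.
have sRL := proper_sub pRL.
have key : forall x, x \in L -> x \notin R -> <<x ^: G>> = L.
  move=> x xL xR.
  have nKG : <<x ^: G>> <| G.
    rewrite /normal norms_gen ?class_norm // andbT gen_subG.
    by apply: class_subG (subsetP sLG x xL) _.
  have sKL : <<x ^: G>> \subset L.
    by rewrite gen_subG class_sub_norm // (normal_norm nLG).
  have xK : x \in <<x ^: G>> by rewrite mem_gen // class_refl.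
  case: (boolP (<<x ^: G>> \proper L)) => pKL; last first.
    by rewrite properE sKL /= negbK in pKL; apply/eqP; rewrite eqEsubset sKL.
  have solK := solP [group of <<x ^: G>>] nKG pKL.
  set K := [group of <<x ^: G>>] in solK nKG sKL xK.
  have nKRG : (K <*> R)%G <| G by apply: normalY.
  have sKRL : (K <*> R)%G \subset L by rewrite join_subG sKL.
  have nRKR : R <| (K <*> R)%G.
    by apply: normalS nRG; [exact: joing_subr | exact: normal_sub nKRG].
  have solKR : solvable (K <*> R)%G.
    rewrite (series_sol nRKR) solR /= quotientYidr ?quotient_sol //.
    exact: subset_trans (normal_sub nKG) (normal_norm nRG).
  case: (boolP ((K <*> R)%G \proper L)) => pKRL.
    have eKR := maxR (K <*> R)%G; rewrite nKRG pKRL joing_subr in eKR.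
    have := eKR isT isT => eq; case/negP: xR.
    by rewrite -[R : {set gT}]eq /= (subsetP (joing_subl _ _)).
  have eKRL : (K <*> R)%G :=: L.
    by rewrite properE sKRL /= negbK in pKRL; apply/eqP; rewrite eqEsubset sKRL.
  by move: nsolL; rewrite -eKRL solKR.
have ord_eq : forall x y, x \in L -> x \notin R -> y \in L -> y \notin R ->
    #[x] = #[y].
  move=> x y xL xR yL yR.
  have := MP x y (subsetP sLG x xL) (subsetP sLG y yL).
  rewrite (key x xL xR) (key y yL yR) => /(_ erefl) [] /imsetP [g _ ->].
    by rewrite orderJ.
  by rewrite orderJ orderV.
have [x xL xR] : exists2 x, x \in L & x \notin R by case/properP: pRL.
have ox : 1 < #[x].
  rewrite ltn_neqAle order_gt0 andbT eq_sym order_eq1.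
  by apply: contra xR => /eqP ->; apply: group1.
set p := pdiv #[x].
have p_pr : prime p := pdiv_prime ox.
have powR : forall y, y \in L -> y ^+ p \in R.
  move=> y yL; case: (boolP (y \in R)) => yR; first exact: groupX.
  apply/negPn/negP => ypR.
  have e1 := ord_eq _ _ yL yR (groupX p yL) ypR.
  have e2 := ord_eq _ _ xL xR yL yR.
  have pdy : p %| #[y] by rewrite -e2 /p pdiv_dvd.
  move: e1; rewrite (orderXdiv pdy) => e1.
  have := ltn_Pdiv (prime_gt1 p_pr) (order_gt0 y).
  by rewrite -e1 ltnn.
have pQ : p.-group (L / R).
  apply/pgroupP => q q_pr qdv.
  have [u uQ ou] := Cauchy q_pr qdv.
  case/morphimP: uQ => y Ny yL ->{u} in ou *.
  have : #[coset R y] %| p.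
    rewrite order_dvdn -morphX //= coset_id //; exact: powR.
  by rewrite ou dvdn_prime2.
have nRL : R <| L by apply: normalS nRG.
by move: nsolL; rewrite (series_sol nRL) solR (pgroup_sol pQ).
Qed.
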